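(* Let $G$ be an infinite finitely generated group and let $p\in\mathbb{N}$, $p\ge 2$. Then $HX_0(G,\mathbb{Z}_p)=0$. Equivalently: for every function $c\colon G\to\mathbb{Z}_p$ there exist $R>0$ and a $1$-chain $\psi=\sum_{x,y\in G}\psi_{[x,y]}[x,y]$ with coefficients $\psi_{[x,y]}\in\mathbb{Z}_p$ and $\psi_{[x,y]}=0$ whenever $d(x,y)\ge R$, such that $\partial\psi=c$.
   Context: Fix a finite symmetric generating set $S$ of $G$ and let $d$ be the word metric on $G$ with respect to $S$ (equivalently the path metric of the Cayley graph $\Gamma_G$). For an abelian group $A$, let $CX_0(G,A)$ be the group of all functions $G\to A$ (formal sums $\sum_{x\in G}c_x x$, possibly infinite), and let $CX_1(G,A)$ be the group of formal (possibly infinite) $1$-chains $c=\sum_{x,y\in G}c_{[x,y]}[x,y]$ with $c_{[x,y]}\in A$ such that for each $c$ there is $R>0$ with $c_{[x,y]}=0$ whenever $d(x,y)\ge R$. The differential $\partial\colon CX_1(G,A)\to CX_0(G,A)$ is the $A$-linear extension of $\partial[x,y]=y-x$ (well defined since, by the bounded-range condition and local finiteness, each vertex receives finitely many contributions). The $0$-th coarse (locally finite) homology is $HX_0(G,A)=CX_0(G,A)/\operatorname{Im}\partial$. Here $\mathbb{Z}_p$ is the cyclic group of order $p$. *)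

(* Defs.v *)
From HB Require Import structures.
From mathcomp Require Import all_boot all_order all_algebra.
Set Implicit Arguments.
Unset Strict Implicit.
Unset Printing Implicit Defensive.
Import GRing.Theory.

Section CoarseDefs.
Variable G : groupType.
Local Open Scope group_scope.

Definition word_prod (w : seq G) : G := foldr (fun s acc => s * acc) 1 w.

Definition symmetric_gen (S : seq G) : Prop := forall s, s \in S -> s^-1 \in S.

(* S generates G (as a monoid; for symmetric S this is the same as as a group) *)
Definition generates (S : seq G) : Prop :=
  forall g : G, exists w : seq G, all (fun s => s \in S) w /\ g = word_prod w.

Definition infinite_group : Prop := ~ exists s : seq G, forall g : G, g \in s.

Definition word_dist_lt (S : seq G) (x y : G) (R : nat) : Prop :=
  exists w : seq G, [/\ all (fun s => s \in S) w, (size w < R)%N & y = x * word_prod w].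
End CoarseDefs.

Section Chains.
Variables (G : groupType) (A : zmodType).
Local Open Scope ring_scope.

(* A 1-chain is psi : G -> G -> A, psi x y = coefficient of [x,y].
   bounded_range S psi R : psi_[x,y] = 0 whenever d(x,y) >= R. *)
Definition bounded_range (S : seq G) (psi : G -> G -> A) (R : nat) : Prop :=
  forall x y : G, psi x y != 0 -> word_dist_lt S x y R.

(* boundary psi = c, where (boundary psi)(v) = sum_x psi_[x,v] - sum_y psi_[v,y]
   (from d[x,y] = y - x); the sums are over any finite duplicate-free list s
   containing all x with a nonzero coefficient psi_[x,v] or psi_[v,x]. *)
Definition is_boundary (psi : G -> G -> A) (c : G -> A) : Prop :=
  forall v : G, exists s : seq G,
    [/\ uniq s,
        (forall x : G, x \notin s -> psi x v = 0 /\ psi v x = 0)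
      & c v = \sum_(x <- s) (psi x v - psi v x)].
End Chains.

(* Main.v *)
Require Import Defs.
From HB Require Import structures.
From mathcomp Require Import all_boot all_order all_algebra.
From mathcomp Require Import zify.
From Stdlib Require Import ClassicalEpsilon.
Set Implicit Arguments. Unset Strict Implicit. Unset Printing Implicit Defensive.
Import GRing.Theory.

Definition pb (P : Prop) : bool := if excluded_middle_informative P then true else false.
Lemma pbP P : reflect P (pb P).
Proof. rewrite /pb; case: excluded_middle_informative => h; constructor; done. Qed.

Section Proof1.
Variable G : groupType.
Variable S : seq G.
Hypothesis Hgen : generates S.
Hypothesis Hinf : infinite_group G.
Local Open Scope group_scope.

Lemma word_prod_rcons (w : seq G) t : word_prod (rcons w t) = word_prod w * t.
Proof. elim: w => [|x w IH] /=; first by rewrite mul1g mulg1. by rewrite IH mulgA. Qed.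

Definition inS (w : seq G) := all (fun s => s \in S) w.

Lemma ex_len (v : G) : exists n, pb (exists w, [/\ inS w, size w = n & v = word_prod w]).
Proof. have [w [Hw ->]] := Hgen v. exists (size w); apply/pbP; by exists w. Qed.

Definition len v := ex_minn (ex_len v).

Lemma lenP v : exists w, [/\ inS w, size w = len v & v = word_prod w].
Proof. rewrite /len; case: ex_minnP => n /pbP H _; exact H. Qed.

Lemma len_min v w : inS w -> v = word_prod w -> (len v <= size w)%N.
Proof. move=> Hw Hv; rewrite /len; case: ex_minnP => n _ Hm; apply: Hm; apply/pbP; by exists w. Qed.

Definition wd v := proj1_sig (constructive_indefinite_description _ (lenP v)).
Lemma wdP v : [/\ inS (wd v), size (wd v) = len v & v = word_prod (wd v)].
Proof. rewrite /wd; case: constructive_indefinite_description => w /=; done. Qed.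

Definition par v := word_prod (take (size (wd v)).-1 (wd v)).
Definition lst v := last 1 (wd v).

Lemma len1 : len 1 = 0%N.
Proof. apply/eqP; rewrite -leqn0; exact: (len_min (w:=[::])). Qed.

Lemma len0 v : len v = 0%N -> v = 1.
Proof. by move=> H; case: (wdP v) => _; rewrite H => /size0nil -> ->. Qed.

Lemma par1 : par 1 = 1.
Proof. rewrite /par; case: (wdP 1) => _; rewrite len1 => /size0nil -> _ //. Qed.

Lemma par_spec v : v != 1 -> [/\ lst v \in S, v = par v * lst v & len v = (len (par v)).+1].
Proof.
move=> Hv1; case: (wdP v); rewrite /par /lst.
case/lastP: (wd v) => [|w t].
  by move=> _ _ Hv; rewrite Hv eqxx in Hv1.
rewrite /inS all_rcons size_rcons /= -cats1 take_size_cat // last_cat /=.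
move=> /andP[Ht Hw] Hs Hv.
rewrite cats1 word_prod_rcons in Hv.
split => //.
have h1 := len_min Hw (erefl (word_prod w)).
have [w' [Hw' Hs' Hv']] := lenP (word_prod w).
have h2 : (len v <= size (rcons w' t))%N.
  apply: len_min; first by rewrite /inS all_rcons Ht.
  by rewrite word_prod_rcons -Hv' Hv.
rewrite size_rcons in h2. lia.
Qed.

Definition T v u := exists k, iter k par u = v.

Lemma T1 u : T 1 u.
Proof.
suff H : forall n u, len u = n -> iter n par u = 1 by exists (len u); apply: H.
move=> {u} n; elim: n => [|n IH] u Hu; first by rewrite (len0 Hu).
have Hu1 : u != 1 by apply/eqP => E; rewrite E len1 in Hu.
have [_ _ Hl] := par_spec Hu1.
rewrite iterSr; apply IH; rewrite Hl in Hu; by case: Hu.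
Qed.

Definition ch v := filter (fun w => (v == par w) && (w != 1)) (undup [seq v * t | t <- S]).

Lemma mem_ch v w : (w \in ch v) = (v == par w) && (w != 1).
Proof.
rewrite mem_filter; case E: (v == par w); case E2: (w != 1) => //=.
have [Ht Hw _] := par_spec E2.
rewrite mem_undup; apply/mapP; exists (lst w) => //.
by rewrite {1}Hw (eqP E).
Qed.

Lemma uniq_ch v : uniq (ch v).
Proof. by rewrite filter_uniq // undup_uniq. Qed.

Lemma par_ch v w : w \in ch v -> par w = v.
Proof. by rewrite mem_ch => /andP[/eqP -> _]. Qed.

Lemma len_ch v w : w \in ch v -> len w = (len v).+1.
Proof. move=> H; have := H; rewrite mem_ch => /andP[/eqP E Hw]. by have [_ _ ->] := par_spec Hw; rewrite E. Qed.

Lemma T_refl v : T v v.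
Proof. by exists 0%N. Qed.

Lemma T_ch v w u : w \in ch v -> T w u -> T v u.
Proof. move=> Hw [k Hk]; exists k.+1; by rewrite iterS Hk (par_ch Hw). Qed.

Lemma T_split v u : T v u -> u = v \/ exists2 w, w \in ch v & T w u.
Proof.
case=> k; elim: k => [|k IH] /= H; first by left.
case: (eqVneq (iter k par u) 1) => Hw.
  apply: IH; by rewrite Hw -H Hw par1.
right; exists (iter k par u); last by exists k.
by rewrite mem_ch H eqxx Hw.
Qed.

Lemma ball n : exists l : seq G, forall g, (len g <= n)%N -> g \in l.
Proof.
elim: n => [|n [l Hl]].
  by exists [:: 1] => g; rewrite leqn0 => /eqP /len0 ->; rewrite mem_head.
exists (l ++ [seq x * t | x <- l, t <- S]) => g Hg.
case: (eqVneq g 1) => Hg1.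
  by rewrite mem_cat Hl // Hg1 len1.
have [Ht Hp Hl'] := par_spec Hg1.
rewrite mem_cat; apply/orP; right.
rewrite Hp; apply: allpairs_f => //.
apply: Hl; rewrite Hl' in Hg; exact Hg.
Qed.

Definition F v := exists M, forall u, T v u -> (len u <= M)%N.
Definition Fb v := pb (F v).

Lemma notF1 : ~ F 1.
Proof.
case=> M HM; have [l Hl] := ball M; apply: Hinf; exists l => g.
apply: Hl; apply: HM; exact: T1.
Qed.

Lemma bound_list (l : seq G) : (forall w, w \in l -> F w) ->
  exists M, forall w, w \in l -> forall u, T w u -> (len u <= M)%N.
Proof.
elim: l => [|x l IH] H; first by exists 0%N.
have [M1 H1] := H x (mem_head _ _).
have [M2 H2] : exists M, forall w, w \in l -> forall u, T w u -> (len u <= M)%N.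
  apply: IH => w Hw; apply: H; by rewrite in_cons Hw orbT.
exists (maxn M1 M2) => w; rewrite in_cons => /orP[/eqP -> | Hw] u Hu.
  by rewrite leq_max H1.
by rewrite leq_max (H2 w Hw u Hu) orbT.
Qed.

Lemma Fb_ch v w : Fb v -> w \in ch v -> Fb w.
Proof.
move=> /pbP [M HM] Hw; apply/pbP; exists M => u Hu; apply: HM; exact: T_ch Hw Hu.
Qed.

Lemma konig v : ~~ Fb v -> exists2 w, w \in ch v & ~~ Fb w.
Proof.
move=> Hv; case: (pbP (exists2 w, w \in ch v & ~~ Fb w)) => // Hno.
have [M HM] : exists M, forall w, w \in ch v -> forall u, T w u -> (len u <= M)%N.
  apply: bound_list => w Hw; apply/pbP; apply/negPn/negP => Hn; apply: Hno; by exists w.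
exfalso; move/negP: Hv; apply; apply/pbP; exists (maxn M (len v)) => u /T_split [-> | [w Hw Hu]].
  by rewrite leq_max leqnn orbT.
by rewrite leq_max (HM w Hw u Hu).
Qed.


Variable Z : zmodType.
Variable c : G -> Z.

Fixpoint Af n v : Z := match n with
  | 0 => c v
  | n.+1 => (c v + \sum_(w <- ch v) Af n w)%R end.

Lemma Stab k : forall M v, (forall u, T v u -> (len u <= M)%N) -> (M - len v <= k)%N ->
  forall n, (k <= n)%N -> Af n v = Af k v.
Proof.
elim: k => [|k IH] M v HM Hk n Hn.
  have H0 : forall m, Af m v = c v.
    case=> [//|m] /=; rewrite big1_seq ?addr0 // => w /andP[_ Hw].
    exfalso; have := HM w (T_ch Hw (T_refl w)); rewrite (len_ch Hw); lia.
  by rewrite !H0.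
case: n Hn => [//|n] Hn /=; congr (_ + _)%R; apply: eq_big_seq => w Hw.
apply: (IH M) => //.
  move=> u Hu; apply: HM; exact: T_ch Hw Hu.
rewrite (len_ch Hw); lia.
Qed.

Lemma exM v : exists M, Fb v -> forall u, T v u -> (len u <= M)%N.
Proof. case: (pbP (F v)) => [[M HM]|HF]; first by exists M => _. by exists 0%N => /pbP. Qed.

Definition Mv v := proj1_sig (constructive_indefinite_description _ (exM v)).
Lemma Mv_spec v : Fb v -> forall u, T v u -> (len u <= Mv v)%N.
Proof. rewrite /Mv; case: constructive_indefinite_description => M /=; done. Qed.

Definition a v := Af (Mv v - len v) v.

Lemma a_eq v : Fb v -> a v = (c v + \sum_(w <- ch v) a w)%R.
Proof.
move=> Hv; rewrite /a.
rewrite -(Stab (Mv_spec Hv) (leqnn _) (leqnSn (Mv v - len v))) /=.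
congr (_ + _)%R; apply: eq_big_seq => w Hw.
have Hw' := Fb_ch Hv Hw.
have HMw : forall u, T w u -> (len u <= Mv v)%N.
  move=> u Hu; apply: (Mv_spec Hv); exact: T_ch Hw Hu.
set K := maxn (Mv v - len v) (Mv w - len w).
have h1 : (Mv v - len w <= Mv v - len v)%N by rewrite (len_ch Hw); lia.
have e1 : Af K w = Af (Mv v - len v) w := Stab HMw h1 (leq_maxl _ _).
have e2 : Af K w = Af (Mv w - len w) w := Stab (Mv_spec Hw') (leqnn _) (leq_maxr _ _).
by rewrite -e1 e2.
Qed.

Lemma exnxt v : exists w, ~~ Fb v -> w \in ch v /\ ~~ Fb w.
Proof.
case: (boolP (Fb v)) => Hv; first by exists v.
have [w Hw Hw'] := konig Hv; by exists w.
Qed.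

Definition nxt v := proj1_sig (constructive_indefinite_description _ (exnxt v)).
Lemma nxt_spec v : ~~ Fb v -> nxt v \in ch v /\ ~~ Fb (nxt v).
Proof. rewrite /nxt; case: constructive_indefinite_description => M /=; done. Qed.

Fixpoint Bf n v : Z := match n with
  | 0 => 0%R
  | n.+1 => if [&& ~~ Fb v, v != 1 & nxt (par v) == v]
            then (Bf n (par v) - c (par v) - \sum_(w <- ch (par v) | Fb w) a w)%R
            else 0%R end.

Definition b v := Bf (len v) v.
Definition val v := if Fb v then a v else b v.
Definition psi x y := if (x == par y) && (y != 1) then val y else 0%R.

Lemma b1 : b 1 = 0%R.
Proof. by rewrite /b len1. Qed.

Lemma b_nxt v : ~~ Fb v -> b (nxt v) = (b v - c v - \sum_(w <- ch v | Fb w) a w)%R.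
Proof.
move=> Hv; have [Hn HF] := nxt_spec Hv.
have := Hn; rewrite mem_ch => /andP[_ Hn1].
by rewrite /b (len_ch Hn) /= (par_ch Hn) HF Hn1 eqxx.
Qed.

Lemma b_other v w : w \in ch v -> w != nxt v -> b w = 0%R.
Proof.
move=> Hw Hne; rewrite /b (len_ch Hw) /= (par_ch Hw).
have Hne' : (nxt v == w) = false by rewrite eq_sym (negbTE Hne).
by rewrite Hne' !andbF.
Qed.

Lemma boundary : is_boundary psi c.
Proof.
move=> v.
set s := undup (par v :: [seq v * t | t <- S]).
have Hs : uniq s by exact: undup_uniq.
have Hin : (\sum_(x <- s) psi x v)%R = if v != 1 then val v else 0%R.
  rewrite (bigD1_seq (par v)) //=; last by rewrite mem_undup mem_head.
  rewrite big1 ?addr0; first by rewrite /psi eqxx.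
  by move=> x Hx; rewrite /psi (negbTE Hx).
have Hout : (\sum_(x <- s) psi v x = \sum_(w <- ch v) val w)%R.
  rewrite /psi -big_mkcond /= -big_filter; apply: perm_big.
  apply: uniq_perm; [by rewrite filter_uniq | exact: uniq_ch | ].
  move=> x; rewrite mem_filter; case Px: ((v == par x) && (x != 1)); last by rewrite mem_ch Px.
  rewrite /=.
  have : x \in ch v by rewrite mem_ch.
  rewrite mem_filter Px /= => Hx; rewrite Hx mem_undup in_cons.
  by rewrite mem_undup in Hx; rewrite Hx orbT.
exists s; split => //.
  move=> x Hx; split; rewrite /psi.
    case: eqP => // E; exfalso; move/negP: Hx; apply; by rewrite E mem_undup mem_head.
  case Px: ((v == par x) && (x != 1)) => //; exfalso; move/negP: Hx; apply.
  have : x \in ch v by rewrite mem_ch.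
  rewrite mem_filter Px /= !mem_undup in_cons => ->; by rewrite orbT.
rewrite sumrB Hin Hout.
case: (boolP (Fb v)) => HF.
  have Hv1 : v != 1 by apply/eqP => E; rewrite E in HF; move/pbP: HF; exact: notF1.
  have -> : (\sum_(w <- ch v) val w = \sum_(w <- ch v) a w)%R.
    by apply: eq_big_seq => w Hw; rewrite /val (Fb_ch HF Hw).
  by rewrite Hv1 /val HF (a_eq HF) addrK.
have -> : (if v != 1 then val v else 0%R) = b v.
  case: eqVneq => [->|_]; first by rewrite b1.
  by rewrite /val (negbTE HF).
rewrite (bigID Fb) /=.
rewrite (eq_bigr a); last by move=> w Hw; rewrite /val Hw.
rewrite [X in (_ - (_ + X))%R](eq_bigr b); last by move=> w Hw; rewrite /val (negbTE Hw).
have [Hn HnF] := nxt_spec HF.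
have -> : (\sum_(i <- ch v | ~~ Fb i) b i = b (nxt v))%R.
  have Hnm : nxt v \in [seq i <- ch v | ~~ Fb i] by rewrite mem_filter HnF Hn.
  rewrite -big_filter (bigD1_seq (nxt v) Hnm) /=; last by rewrite filter_uniq // uniq_ch.
  rewrite big1_seq ?addr0 // => w /andP[Hne]; rewrite mem_filter => /andP[_ Hw].
  exact: b_other Hw Hne.
rewrite b_nxt //.
set X := (\sum_(i <- ch v | Fb i) a i)%R.
by rewrite [(X + _)%R]addrC subrK opprB addrC subrK.
Qed.

Lemma bounded : bounded_range S psi 2.
Proof.
move=> x y; rewrite /psi; case Hxy: ((x == par y) && (y != 1)); last by rewrite eqxx.
move: Hxy => /andP[/eqP -> Hy] _.
have [Ht Hp _] := par_spec Hy.
exists [:: lst y]; split => //=; first by rewrite Ht.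
by rewrite mulg1.
Qed.

End Proof1.


Theorem lemma1 (G : groupType) (S : seq G)
  (Hsym : symmetric_gen S) (Hgen : generates S) (Hinf : infinite_group G)
  (p : nat) (Hp : (1 < p)%N) (c : G -> 'Z_p) :
  exists (R : nat) (psi : G -> G -> 'Z_p),
    (0 < R)%N /\ bounded_range S psi R /\ is_boundary psi c.
Proof.
exists 2%N, (psi Hgen c); split => //; split.
  exact: bounded.
exact: (boundary Hgen Hinf c).
Qed.
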